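(* Let $\mathcal{AF}_{\vdash}=(\vdash,\overline{\cdot},\widehat{\cdot})$ be a setting and let $\vdash^{\emptyset}$ be the restriction of $\vdash$ to pairs $(\Gamma,\gamma)$ for which there is no $(\emptyset,\delta)\in{\vdash}$ with $\delta\in\overline{\psi}$ for some $\psi\in\widehat{\Gamma}$. If the setting $(\vdash^{\emptyset},\overline{\cdot},\widehat{\cdot})$ satisfies Pre-Relevance, then for each $\mathsf{Sem}\in\{\mathsf{Grd},\mathsf{Prf}\}$ the relation $\mathrel{\mid\!\sim}^{\mathcal{AF}_{\vdash}}_{\mathsf{Sem}}$ satisfies Non-Interference: for all $\mathcal{S}_1\cup\{\phi\}\cup\mathcal{S}_2\subseteq\mathcal{L}$ with $(\mathcal{S}_1\cup\{\phi\})\mid\mathcal{S}_2$, $\mathcal{S}_1\mathrel{\mid\!\sim}^{\mathcal{AF}_{\vdash}}_{\mathsf{Sem}}\phi$ iff $\mathcal{S}_1\cup\mathcal{S}_2\mathrel{\mid\!\sim}^{\mathcal{AF}_{\vdash}}_{\mathsf{Sem}}\phi$.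
   Context: $\mathcal{L}$ is the set of formulas of a language built from propositional atoms; $\mathsf{Atoms}(\mathcal{S})$ is the set of atoms occurring in $\mathcal{S}$, and $\mathcal{S}_1\mid\mathcal{S}_2$ means $\mathsf{Atoms}(\mathcal{S}_1)\cap\mathsf{Atoms}(\mathcal{S}_2)=\emptyset$. A setting is $(\vdash,\overline{\cdot},\widehat{\cdot})$ with ${\vdash}\subseteq\wp_{\sf fin}(\mathcal{L})\times\mathcal{L}$ arbitrary, $\overline{\cdot}:\mathcal{L}\to\wp(\mathcal{L})$, $\widehat{\cdot}$ assigning to each nonempty finite set of formulas a finite set of formulas, with $\widehat{\emptyset}=\emptyset$. $\mathit{Arg}_{\vdash}(\mathcal{S})=\{(\Gamma,\gamma):\Gamma\subseteq\mathcal{S}\text{ finite},\Gamma\vdash\gamma\}$; in $\mathcal{AF}_{\vdash}(\mathcal{S})$, $(\Gamma,\gamma)$ attacks $(\Gamma',\gamma')$ iff $\gamma\in\overline{\phi}$ for some $\phi\in\widehat{\Gamma'}$. Dung semantics: conflict-free, defends, admissible, complete (admissible and contains all it defends), preferred ($\subseteq$-maximal complete), grounded ($\subseteq$-minimal complete). $\mathcal{S}\mathrel{\mid\!\sim}^{\mathcal{AF}}_{\mathsf{Sem}}\phi$ iff every $\mathsf{Sem}$-extension of $\mathcal{AF}(\mathcal{S})$ contains an argument with conclusion $\phi$. A setting satisfies Pre-Relevance iff (a) for all $\mathcal{S}_1,\mathcal{S}_2,\phi$ with $\mathcal{S}_1\cup\{\phi\}\mid\mathcal{S}_2$, $\mathcal{S}_1\cup\mathcal{S}_2\vdash\phi$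 implies $\mathcal{S}_1'\vdash\phi$ for some $\mathcal{S}_1'\subseteq\mathcal{S}_1$; (b) it is prime: for all sets of atoms $\mathcal{A}_1\mid\mathcal{A}_2$, all finite $\mathcal{S}_1,\mathcal{T}_1,\mathcal{S}_2,\mathcal{T}_2$ with $\mathsf{Atoms}(\mathcal{S}_i),\mathsf{Atoms}(\mathcal{T}_i)\subseteq\mathcal{A}_i$, and all $\phi,\psi$ with $\psi\in\overline{\phi}$, $\phi\in\widehat{\mathcal{T}_1\cup\mathcal{T}_2}$: if $\mathcal{S}_1\cup\mathcal{S}_2\vdash\psi$ then there are $i\in\{1,2\}$, $\mathcal{S}_i'\subseteq\mathcal{S}_i$, $\phi_i\in\widehat{\mathcal{T}_i}$, $\psi_i\in\overline{\phi_i}$ with $\mathcal{S}_i'\vdash\psi_i$; (c) $\widehat{\Delta}\subseteq\widehat{\Delta\cup\Delta'}$ for all finite $\Delta,\Delta'$. *)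

(* Defs.v *)
From mathcomp Require Import all_boot.
From mathcomp Require Import finmap.

Set Implicit Arguments.
Unset Strict Implicit.
Unset Printing Implicit Defensive.

Local Open Scope fset_scope.

Section Defs.

(* The language: an arbitrary type of formulas L together with the relation
   "atom p occurs in formula psi". *)
Variables (L : choiceType) (Atom : Type) (atoms : L -> Atom -> Prop).

(* (possibly infinite) sets of formulas are predicates on L *)
Definition fs (G : {fset L}) : L -> Prop := fun x => x \in G.

Definition AtomsS (S : L -> Prop) : Atom -> Prop :=
  fun p => exists psi, S psi /\ atoms psi p.

(* S1 | S2 : no shared atoms *)
Definition atom_disjoint (S1 S2 : L -> Prop) : Prop :=
  forall p, AtomsS S1 p -> AtomsS S2 p -> False.

Definition setU (S1 S2 : L -> Prop) : L -> Prop := fun x => S1 x \/ S2 x.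
Definition setU1 (S : L -> Prop) (phi : L) : L -> Prop := fun x => S x \/ x = phi.

Record setting := Setting {
  vdash : {fset L} -> L -> Prop;
  over  : L -> L -> Prop;            (* over phi psi  <->  psi \in overline(phi) *)
  hat   : {fset L} -> {fset L};
  hat0  : hat fset0 = fset0 }.

Definition argument := ({fset L} * L)%type.

Definition Arg (st : setting) (S : L -> Prop) (a : argument) : Prop :=
  (forall x, x \in a.1 -> S x) /\ vdash st a.1 a.2.

Definition attacks (st : setting) (a b : argument) : Prop :=
  exists phi, phi \in hat st b.1 /\ over st phi a.2.

Section Dung.
Variables (st : setting) (S : L -> Prop).
Let A := Arg st S.
Let att := attacks st.

Definition conflict_free (E : argument -> Prop) : Prop :=
  forall a b, E a -> E b -> ~ att a b.

Definition defends (E : argument -> Prop) (a : argument) : Prop :=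
  forall b, A b -> att b a -> exists c, E c /\ att c b.

Definition admissible (E : argument -> Prop) : Prop :=
  (forall a, E a -> A a) /\ conflict_free E /\ (forall a, E a -> defends E a).

Definition complete (E : argument -> Prop) : Prop :=
  admissible E /\ (forall a, A a -> defends E a -> E a).

Definition subsetA (E F : argument -> Prop) := forall a, E a -> F a.

Definition preferred (E : argument -> Prop) : Prop :=
  complete E /\ (forall F, complete F -> subsetA E F -> subsetA F E).

Definition grounded (E : argument -> Prop) : Prop :=
  complete E /\ (forall F, complete F -> subsetA F E -> subsetA E F).
End Dung.

Inductive sem := Grd | Prf.

Definition is_ext (Sm : sem) (st : setting) (S : L -> Prop) (E : argument -> Prop) :=
  match Sm with
  | Grd => grounded st S E
  | Prf => preferred st S E
  end.

Definition entails (st : setting) (Sm : sem) (S : L -> Prop) (phi : L) : Prop :=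
  forall E, is_ext Sm st S E -> exists a, E a /\ a.2 = phi.

Definition vdash_empty (st : setting) (G : {fset L}) (g : L) : Prop :=
  vdash st G g /\
  ~ (exists delta, vdash st fset0 delta /\
       exists psi, psi \in hat st G /\ over st psi delta).

Definition restrict_empty (st : setting) : setting :=
  @Setting (vdash_empty st) (over st) (hat st) (hat0 st).

Definition pre_relevance (st : setting) : Prop :=
  (forall (S1 S2 : {fset L}) (phi : L),
      atom_disjoint (setU1 (fs S1) phi) (fs S2) ->
      vdash st (S1 `|` S2) phi ->
      exists S1' : {fset L}, S1' `<=` S1 /\ vdash st S1' phi) /\
  (forall (A1 A2 : Atom -> Prop), (forall p, A1 p -> A2 p -> False) ->
   forall (S1 T1 S2 T2 : {fset L}),
     (forall p, AtomsS (fs S1) p -> A1 p) ->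
     (forall p, AtomsS (fs T1) p -> A1 p) ->
     (forall p, AtomsS (fs S2) p -> A2 p) ->
     (forall p, AtomsS (fs T2) p -> A2 p) ->
   forall phi psi, over st phi psi -> phi \in hat st (T1 `|` T2) ->
     vdash st (S1 `|` S2) psi ->
     (exists S1' phi1 psi1, S1' `<=` S1 /\ phi1 \in hat st T1 /\
         over st phi1 psi1 /\ vdash st S1' psi1) \/
     (exists S2' phi2 psi2, S2' `<=` S2 /\ phi2 \in hat st T2 /\
         over st phi2 psi2 /\ vdash st S2' psi2)) /\
  (forall D D' : {fset L}, hat st D `<=` hat st (D `|` D')).

Definition non_interference (st : setting) (Sm : sem) : Prop :=
  forall (S1 S2 : L -> Prop) (phi : L),
    atom_disjoint (setU1 S1 phi) S2 ->
    (entails st Sm S1 phi <-> entails st Sm (setU S1 S2) phi).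

End Defs.

(* Main.v *)
Require Import Defs.
From mathcomp Require Import all_boot finmap boolp classical_sets.
From Stdlib Require Import Classical.

Set Implicit Arguments.
Unset Strict Implicit.
Unset Printing Implicit Defensive.

Section Dung.
Variables (L : choiceType) (st : setting L) (S : L -> Prop).

Lemma no_att_empty b g : ~ attacks st b (fset0, g).
Proof. by case=> p [/=]; rewrite hat0 in_fset0. Qed.

Lemma defends_mono (E F : argument L -> Prop) a :
  (forall x, E x -> F x) -> defends st S E a -> defends st S F a.
Proof.
move=> EF d b Ab bat; have [c [Ec cb]] := d b Ab bat; exists c; split; auto.
Qed.

Lemma adm_ext (E F : argument L -> Prop) :
  (forall a, E a <-> F a) -> admissible st S E -> admissible st S F.
Proof.
move=> EF [EA [cf df]]; split; [|split].
- by move=> a /EF /EA.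
- by move=> a b /EF Ea /EF Eb; apply: cf.
- move=> a /EF /df; apply: defends_mono => x; apply EF.
Qed.

Lemma fundamental (E : argument L -> Prop) a :
  admissible st S E -> Arg st S a -> defends st S E a ->
  admissible st S (fun x => E x \/ x = a).
Proof.
move=> [EA [cf df]] Aa da.
have c1 : forall x, E x -> ~ attacks st x a.
  move=> x Ex xa; have [c [Ec cx]] := da x (EA x Ex) xa; exact: cf c x Ec Ex cx.
have c2 : forall x, E x -> ~ attacks st a x.
  move=> x Ex ax; have [c [Ec ca]] := df x Ex a Aa ax; exact: c1 c Ec ca.
split; [|split].
- by move=> x [/EA|->].
- move=> x y [Ex|->] [Ey|->].
  + exact: cf.
  + exact: c1.
  + exact: c2.
  + move=> aa; have [c [Ec ca]] := da a Aa aa; exact: c1 c Ec ca.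
- move=> x [Ex|->].
  + by apply: defends_mono (df x Ex) => ? ?; left.
  + by apply: defends_mono da => ? ?; left.
Qed.

Lemma zorn_pref (E0 : argument L -> Prop) : admissible st S E0 ->
  exists E, preferred st S E /\ (forall a, E0 a -> E a).
Proof.
move=> adm0.
pose P := fun X : set (argument L) => admissible st S (fun a => X a \/ E0 a).
have [|A [PA Amax]] := @Zorn_bigcup _ P.
  move=> F FP Ftot.
  have common : forall u v, (@bigcup _ _ F (fun X => X)) u \/ E0 u ->
      (@bigcup _ _ F (fun X => X)) v \/ E0 v ->
      exists Z, admissible st S Z /\ Z u /\ Z v /\
        (forall x, Z x -> (@bigcup _ _ F (fun X => X)) x \/ E0 x).
    move=> u v [[X FX Xu]|E0u] [[Y FY Yv]|E0v].
    - have [XY|YX] := Ftot X Y FX FY.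
      + exists (fun a => Y a \/ E0 a); split; first exact: FP.
        split; [left; exact: XY|split; [by left|]].
        by move=> x [Yx|E0x]; [left; exists Y|right].
      + exists (fun a => X a \/ E0 a); split; first exact: FP.
        split; [by left|split; [left; exact: YX|]].
        by move=> x [Xx|E0x]; [left; exists X|right].
    - exists (fun a => X a \/ E0 a); split; first exact: FP.
      split; [by left|split; [by right|]].
      by move=> x [Xx|E0x]; [left; exists X|right].
    - exists (fun a => Y a \/ E0 a); split; first exact: FP.
      split; [by right|split; [by left|]].
      by move=> x [Yx|E0x]; [left; exists Y|right].
    - exists E0; split=> //; split=> //; split=> //; by right.
  split; [|split].
  - move=> a ua; have [Z [[ZA _] [Za _]]] := common a a ua ua; exact: ZA.
  - move=> a b ua ub; have [Z [[_ [cf _]] [Za [Zb _]]]] := common a b ua ub.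
    exact: cf.
  - move=> a ua; have [Z [[_ [_ df]] [Za [_ ZU]]]] := common a a ua ua.
    exact: defends_mono ZU (df a Za).
pose M := fun a => A a \/ E0 a.
have maxM : forall F, admissible st S F -> (forall a, M a -> F a) ->
    forall a, F a -> M a.
  move=> F admF MF a Fa; apply: NNPP => nMa.
  have PF : P F.
    apply: adm_ext admF => x; split; first by left.
    by move=> [//|E0x]; apply: MF; right.
  apply: (Amax F) PF; split.
  + by move=> x Ax; apply: MF; left.
  + by move=> FA; apply: nMa; left; apply: FA.
exists M; split; last by move=> a; right.
have cM : complete st S M.
  split; first exact: PA.
  move=> a Aa da.
  apply: (maxM (fun x => M x \/ x = a)); [exact: fundamental|by left|by right].
split=> // F [admF _] MF; exact: maxM.
Qed.

Definition lfp : argument L -> Prop := fun a =>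
  forall X : argument L -> Prop,
    (forall b, Arg st S b -> defends st S X b -> X b) -> X a.

Lemma lfp_least E : complete st S E -> forall a, lfp a -> E a.
Proof. by move=> [_ cE] a; apply. Qed.

Lemma lfp_pre a : Arg st S a -> defends st S lfp a -> lfp a.
Proof.
move=> Aa da X HX; apply: (HX) => //; apply: defends_mono da => x Lx; exact: Lx HX.
Qed.

Lemma lfp_post a : lfp a -> Arg st S a /\ defends st S lfp a.
Proof.
move=> La; apply: (La (fun a => Arg st S a /\ defends st S lfp a)) => b Ab db; split=> //; apply: defends_mono db => x [Ax dx].
exact: lfp_pre.
Qed.

Lemma lfp_cf : conflict_free st lfp.
Proof.
pose Z := fun a => lfp a /\ (forall b, lfp b -> ~ attacks st b a) /\
                   (forall b, lfp b -> ~ attacks st a b).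
suff: forall a, lfp a -> Z a by move=> H a b /H [_ [_ H2]] Lb; apply: H2.
move=> a La; apply: La => {}a Aa da.
have La : lfp a by apply: lfp_pre => //; apply: defends_mono da => x [].
have i : forall b, lfp b -> ~ attacks st b a.
  move=> b Lb ba; have [Ab _] := lfp_post Lb.
  have [c [[_ [_ Zc]] cb]] := da b Ab ba; exact: Zc b Lb cb.
split=> //; split=> // b Lb ab.
have [_ db] := lfp_post Lb; have [c [Lc ca]] := db a Aa ab; exact: i c Lc ca.
Qed.

Lemma lfp_complete : complete st S lfp.
Proof.
split; last exact: lfp_pre.
split; first by move=> a /lfp_post [].
split; first exact: lfp_cf.
by move=> a /lfp_post [].
Qed.

Lemma grounded_lfp E : grounded st S E <-> (forall a, E a <-> lfp a).
Proof.
split.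
- move=> [cE minE] a; split; last exact: lfp_least.
  by apply: (minE lfp lfp_complete); apply: lfp_least.
- move=> EL; have cE : complete st S E.
    have [[LA [Lcf Ld]] Lc] := lfp_complete.
    split; [split; [|split]|].
    + by move=> a /EL /LA.
    + by move=> a b /EL Ea /EL Eb; apply: Lcf.
    + move=> a /EL /Ld; apply: defends_mono => x; apply EL.
    + move=> a Aa da; apply/EL; apply: Lc => //; apply: defends_mono da => x; apply EL.
  split=> // F cF FE a Ea; apply: lfp_least => //; exact/EL.
Qed.

Lemma closure E a b : complete st S E -> E a -> Arg st S b ->
  (forall psi, psi \in hat st b.1 -> psi \in hat st a.1) -> E b.
Proof.
move=> [[EA [_ dE]] cE] Ea Ab hb; apply: cE => // c Ac [p [pb cp]].
apply: (dE a Ea c Ac); exists p; split=> //; exact: hb.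
Qed.

End Dung.

Section Restrict.
Variables (L : choiceType) (st : setting L).
Local Notation st' := (restrict_empty st).

Lemma complete_restrict S E : complete st S E <-> complete st' S E.
Proof.
have d0 : forall d, vdash st fset0 d -> Arg st' S (fset0, d).
  move=> d vd; split; first by move=> x; rewrite in_fset0.
  split=> // -[de [_ [p [/=]]]]; by rewrite hat0 in_fset0.
have A'A : forall a, Arg st' S a -> Arg st S a by move=> a [? [? _]].
split.
- move=> cE; have [[EA [cf dE]] cc] := cE.
  have Ed : forall d, vdash st fset0 d -> E (fset0, d).
    move=> d vd; apply: cc; first by apply: A'A; exact: d0.
    by move=> b _ /no_att_empty.
  split; [split; [|split]|].
  + move=> a Ea; have [aS av] := EA a Ea; split=> //; split=> //.
    move=> [d [vd [p [ph pd]]]].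
    have ad : attacks st (fset0, d) a by exists p.
    by have [c [_ /no_att_empty]] := dE a Ea (fset0, d) (A'A _ (d0 d vd)) ad.
  + exact: cf.
  + move=> a Ea b Ab; exact: dE a Ea b (A'A b Ab).
  + move=> a Aa da; apply: cc; first exact: A'A.
    move=> b Ab ba; have [bS bv] := Ab.
    have [Ab'|nAb'] := classic (Arg st' S b); first exact: da.
    have : exists d, vdash st fset0 d /\ exists p, p \in hat st b.1 /\ Defs.over st p d.
      apply: NNPP => nex; apply: nAb'; split=> //.
    move=> [d [vd [p [pb pd]]]]; exists (fset0, d); split; first exact: Ed.
    by exists p.
- move=> [[EA [cf dE]] cc].
  have Ed : forall d, vdash st fset0 d -> E (fset0, d).
    move=> d vd; apply: cc; first exact: d0.
    by move=> b _ /no_att_empty.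
  split; [split; [|split]|].
  + by move=> a /EA /A'A.
  + exact: cf.
  + move=> a Ea b Ab ba.
    have [Ab'|nAb'] := classic (Arg st' S b); first exact: (dE a Ea b Ab' ba).
    have [bS bv] := Ab.
    have : exists d, vdash st fset0 d /\ exists p, p \in hat st b.1 /\ Defs.over st p d.
      apply: NNPP => nex; apply: nAb'; split=> //.
    move=> [d [vd [p [pb pd]]]]; exists (fset0, d); split; first exact: Ed.
    by exists p.
  + move=> a Aa da; apply: cc.
    * have [aS av] := Aa; split=> //; split=> //.
      move=> [d [vd [p [ph pd]]]].
      have ad : attacks st (fset0, d) a by exists p.
      by have [c [_ /no_att_empty]] := da (fset0, d) (A'A _ (d0 d vd)) ad.
    * move=> b Ab ba; exact: da b (A'A b Ab) ba.
Qed.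

Lemma is_ext_restrict Sm S E : is_ext Sm st S E <-> is_ext Sm st' S E.
Proof.
case: Sm => /=; split=> -[cE m]; (split; [exact/complete_restrict|]);
  move=> F cF; apply: m; exact/complete_restrict.
Qed.

Lemma entails_restrict Sm S phi : entails st Sm S phi <-> entails st' Sm S phi.
Proof.
split=> H E /is_ext_restrict; exact: H.
Qed.

End Restrict.

Section Main.
Local Open Scope fset_scope.
Variables (L : choiceType) (Atom : Type) (atoms : L -> Atom -> Prop)
  (st : setting L).
Hypothesis PR : pre_relevance atoms st.
Variables (S1 S2 : L -> Prop) (phi : L).
Hypothesis Hdis : atom_disjoint atoms (setU1 S1 phi) S2.
Local Notation S := (setU S1 S2).

Definition part1 (G : {fset L}) := [fset x in G | `[< S1 x >]].
Definition part2 (G : {fset L}) := [fset x in G | ~~ `[< S1 x >]].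

Lemma split_eq G : G = part1 G `|` part2 G.
Proof.
by apply/fsetP => x; rewrite !inE -andb_orr orbN andbT.
Qed.

Lemma part1_sub G x : x \in part1 G -> x \in G /\ S1 x.
Proof. by rewrite !inE => /andP[-> /asboolP]. Qed.

Lemma part2_sub G x : x \in part2 G -> x \in G /\ ~ S1 x.
Proof. by rewrite !inE => /andP[-> /asboolP]. Qed.

Lemma hat_mono G G' : G `<=` G' -> forall p, p \in hat st G -> p \in hat st G'.
Proof.
move=> sub p ph; have [_ [_ PRc]] := PR.
by have := fsubsetP (PRc G G') p ph; rewrite (fsetUidPr _ _ sub).
Qed.

Lemma att_mono c x y : attacks st c x -> x.1 `<=` y.1 -> attacks st c y.
Proof. by move=> [p [px pc]] sub; exists p; split=> //; apply: hat_mono px. Qed.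

Lemma Arg_up a : Arg st S1 a -> Arg st S a.
Proof. by move=> [aS av]; split=> // x /aS; left. Qed.

Lemma dis12 q : AtomsS atoms S1 q -> AtomsS atoms S2 q -> False.
Proof.
move=> [y [y1 ya]] h2; exact: (Hdis (ex_intro _ y (conj (or_introl y1) ya)) h2).
Qed.

Lemma KA b x : Arg st S b -> (forall y, y \in x.1 -> S1 y) -> attacks st b x ->
  exists b', Arg st S1 b' /\ b'.1 `<=` b.1 /\ attacks st b' x.
Proof.
move=> [bS bv] xS [p [px pb]].
have [_ [PRb _]] := PR.
have eb := split_eq b.1.
have h1 : forall q, AtomsS atoms (fs (part1 b.1)) q -> AtomsS atoms S1 q.
  by move=> q [y [/part1_sub [_ y1] ya]]; exists y.
have h2 : forall q, AtomsS atoms (fs x.1) q -> AtomsS atoms S1 q.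
  by move=> q [y [/xS y1 ya]]; exists y.
have h3 : forall q, AtomsS atoms (fs (part2 b.1)) q -> AtomsS atoms S2 q.
  move=> q [y [/part2_sub [yb n1] ya]]; exists y; split=> //.
  by case: (bS y yb).
have h4 : forall q, AtomsS atoms (fs fset0) q -> AtomsS atoms S2 q.
  by move=> q [y []]; rewrite /fs in_fset0.
have h5 : p \in hat st (x.1 `|` fset0) by rewrite fsetU0.
have h6 : vdash st (part1 b.1 `|` part2 b.1) b.2 by rewrite -eb.
case: (PRb (AtomsS atoms S1) (AtomsS atoms S2) dis12 (part1 b.1) x.1
   (part2 b.1) fset0 h1 h2 h3 h4 p b.2 pb h5 h6).
- move=> [S1' [p1 [psi1 [sub [p1h [ov vd]]]]]].
  exists (S1', psi1); split; [split=> //|split].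
  + by move=> y /(fsubsetP sub) /part1_sub [].
  + by apply/fsubsetP => y /(fsubsetP sub) /part1_sub [].
  + by exists p1.
- by move=> [S2' [p2 [psi2 [_ []]]]]; rewrite hat0 in_fset0.
Qed.

Lemma closure_sub E a b : complete st S E -> E a -> Arg st S b ->
  b.1 `<=` a.1 -> E b.
Proof. move=> cE Ea Ab sub; apply: closure cE Ea Ab _; exact: hat_mono. Qed.

Lemma PHI E a : complete st S E -> E a -> a.2 = phi ->
  exists a', E a' /\ a'.2 = phi /\ (forall y, y \in a'.1 -> S1 y).
Proof.
move=> cE Ea a2; have [[EA _] _] := cE; have [aS av] := EA a Ea.
have [PRa _] := PR.
have eb := split_eq a.1.
have hd : atom_disjoint atoms (setU1 (fs (part1 a.1)) phi) (fs (part2 a.1)).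
  move=> q [y [hy ya]] [z [/part2_sub [za n1] zq]]; apply: (Hdis (p:=q)).
  + exists y; split=> //; case: hy => [/part1_sub [_ ?]|->]; by [left|right].
  + by exists z; split=> //; case: (aS z za).
have hv : vdash st (part1 a.1 `|` part2 a.1) phi by rewrite -eb -a2.
have [S1' [sub vd]] := PRa (part1 a.1) (part2 a.1) phi hd hv.
have s1 : S1' `<=` a.1.
  by apply/fsubsetP => y /(fsubsetP sub) /part1_sub [].
exists (S1', phi); split; last split=> //.
- apply: (@closure_sub E a (S1', phi) cE Ea _ s1); split=> //.
  by move=> y /(fsubsetP s1) /aS.
- by move=> y /(fsubsetP sub) /part1_sub [].
Qed.

Lemma up_adm E1 : admissible st S1 E1 -> admissible st S E1.
Proof.
move=> [EA [cf dE]]; split; [|split=> //].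
- by move=> a /EA /Arg_up.
- move=> a Ea b Ab ba.
  have [aS _] := EA a Ea.
  have [b' [Ab' [sub b'a]]] := KA Ab aS ba.
  have [c [Ec cb']] := dE a Ea b' Ab' b'a.
  by exists c; split=> //; apply: att_mono cb' sub.
Qed.

Lemma restr_adm E : complete st S E ->
  admissible st S1 (fun a => E a /\ forall y, y \in a.1 -> S1 y).
Proof.
move=> cE; have [[EA [cf dE]] _] := cE.
split; [|split].
- move=> a [Ea aS]; split=> //; by have [_ ?] := EA a Ea.
- by move=> a b [Ea _] [Eb _]; apply: cf.
- move=> a [Ea aS] b Ab ba.
  have [c [Ec cb]] := dE a Ea b (Arg_up Ab) ba.
  have [bS _] := Ab.
  have [c' [Ac' [sub c'b]]] := KA (EA c Ec) bS cb.
  exists c'; split=> //; split; last by have [] := Ac'.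
  exact: closure_sub cE Ec (Arg_up Ac') sub.
Qed.

Lemma G1 a : lfp st S1 a -> lfp st S a.
Proof.
move=> La; suff [] : Arg st S1 a /\ lfp st S a by [].
apply: (La (fun a => Arg st S1 a /\ lfp st S a)) => {La}a Aa da; split=> //.
apply: lfp_pre; first exact: Arg_up.
move=> b Ab ba; have [aS _] := Aa.
have [b' [Ab' [sub b'a]]] := KA Ab aS ba.
have [c [[_ Lc] cb']] := da b' Ab' b'a.
by exists c; split=> //; apply: att_mono cb' sub.
Qed.

Lemma G2 a : lfp st S a -> (forall y, y \in a.1 -> S1 y) -> lfp st S1 a.
Proof.
move=> La aS.
have : Arg st S a /\ forall a', Arg st S a' -> a'.1 `<=` a.1 ->
   (forall y, y \in a'.1 -> S1 y) -> lfp st S1 a'.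
  apply: (La (fun a => Arg st S a /\ forall a', Arg st S a' -> a'.1 `<=` a.1 ->
   (forall y, y \in a'.1 -> S1 y) -> lfp st S1 a')) => {La aS}a Aa da.
  split=> // a' Aa' sub a'S.
  have [_ a'v] := Aa'.
  apply: lfp_pre; first by split.
  move=> b Ab ba'.
  have ba := att_mono ba' sub.
  have [c [[Ac Zc] cb]] := da b (Arg_up Ab) ba.
  have [bS _] := Ab.
  have [c' [Ac' [csub c'b]]] := KA Ac bS cb.
  exists c'; split=> //; apply: Zc => //; first exact: Arg_up.
  by have [] := Ac'.
move=> [Aa H]; apply: H => //; exact: fsubset_refl.
Qed.

End Main.

Lemma entails_grd (L : choiceType) (st : setting L) X psi :
  entails st Grd X psi <-> exists a, lfp st X a /\ a.2 = psi.
Proof.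
split.
- move=> H.
  have gl : grounded st X (lfp st X).
    by apply/grounded_lfp => a; split.
  exact: H _ gl.
- move=> [a [La a2]] E /grounded_lfp EL; exists a; split=> //; exact/EL.
Qed.

Section NI.
Local Open Scope fset_scope.
Variables (L : choiceType) (Atom : Type) (atoms : L -> Atom -> Prop)
  (st : setting L).
Hypothesis PR : pre_relevance atoms st.
Variables (S1 S2 : L -> Prop) (phi : L).
Hypothesis Hdis : atom_disjoint atoms (setU1 S1 phi) S2.
Local Notation S := (setU S1 S2).

Lemma NI Sm : entails st Sm S1 phi <-> entails st Sm S phi.
Proof.
case: Sm.
- rewrite !entails_grd; split.
  + move=> [a [La a2]]; exists a; split=> //; exact: (G1 PR Hdis).
  + move=> [a [La a2]].
    have [a' [La' [a'2 a'S]]] := PHI PR Hdis (lfp_complete st S) La a2.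
    by exists a'; split=> //; apply: (G2 PR Hdis).
- split.
  + move=> H E [cE maxE].
    have [[EA [Ecf dE]] _] := cE.
    have [P1 [prefP1 RP1]] := zorn_pref (restr_adm PR Hdis cE).
    have [[[PA [Pcf dP]] _] _] := prefP1.
    have [p [P1p p2]] := H P1 prefP1.
    have key : forall e q, E e -> P1 q -> attacks st e q -> False.
      move=> e q Ee Pq eqa.
      have [qS _] := PA q Pq.
      have [e' [Ae' [sub e'q]]] := KA PR Hdis (EA e Ee) qS eqa.
      have Ee' : E e' := closure_sub PR cE Ee (Arg_up S2 Ae') sub.
      have Pe' : P1 e' by apply: RP1; split=> //; have [] := Ae'.
      exact: Pcf e' q Pe' Pq e'q.
    have admU : admissible st S (fun x => E x \/ P1 x).
      split; [|split].
      * by move=> x [/EA|/PA /(Arg_up S2)].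
      * move=> x y [Ex|Px] [Ey|Py].
        -- exact: Ecf.
        -- exact: key.
        -- move=> xy; have [c [Ec cx]] := dE y Ey x (Arg_up S2 (PA x Px)) xy.
           exact: key c x Ec Px cx.
        -- exact: Pcf.
      * move=> x [Ex|Px].
        -- by apply: defends_mono (dE x Ex) => ? ?; left.
        -- have [_ [_ dPS]] := up_adm PR Hdis (conj PA (conj Pcf dP)).
           by apply: defends_mono (dPS x Px) => ? ?; right.
    have [Q [[cQ _] UQ]] := zorn_pref admU.
    have EQ : forall x, E x -> Q x by move=> x Ex; apply: UQ; left.
    exists p; split=> //; apply: (maxE Q cQ EQ); apply: UQ; by right.
  + move=> H E1 [cE1 max1].
    have [[E1A [E1cf dE1]] _] := cE1.
    have [E [prefE E1E]] := zorn_pref (up_adm PR Hdis (conj E1A (conj E1cf dE1))).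
    have [a [Ea a2]] := H E prefE.
    have [cE _] := prefE.
    have [a' [Ea' [a'2 a'S]]] := PHI PR Hdis cE Ea a2.
    have [P [[cP _] RP]] := zorn_pref (restr_adm PR Hdis cE).
    have E1P : forall x, E1 x -> P x.
      move=> x E1x; apply: RP; split; first exact: E1E.
      by have [] := E1A x E1x.
    exists a'; split=> //; apply: (max1 P cP E1P); exact: RP.
Qed.

End NI.

Theorem corollary1 (L : choiceType) (Atom : Type) (atoms : L -> Atom -> Prop)
  (st : setting L) :
  pre_relevance atoms (restrict_empty st) ->
  forall Sm : sem, non_interference atoms st Sm.
Proof.
move=> PR Sm S1 S2 phi Hdis.
have H := NI PR Hdis Sm.
split=> h.
- apply: (proj2 (entails_restrict st Sm (setU S1 S2) phi)).
  apply/H; exact: (proj1 (entails_restrict st Sm S1 phi)).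
- apply: (proj2 (entails_restrict st Sm S1 phi)).
  apply/H; exact: (proj1 (entails_restrict st Sm (setU S1 S2) phi)).
Qed.
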